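(* Let $(M,\le,\circ,e,\rightharpoonup,\leftharpoonup)$ be a biclosed poset. Then: (1) $\mathsf{Dial}_M(\mathsf{Set})$ is a category. (2) The tensor product $\otimes$ is a bifunctor on it, and together with the unit $I=(\mathbb{1},\mathbb{1},e)$ (where $\mathbb{1}$ is a one-element set) and suitable associator and left/right unitor isomorphisms it makes $\mathsf{Dial}_M(\mathsf{Set})$ a (generally non-symmetric) monoidal category. (3) For all objects $A,B,C$ there are bijections, natural in $A,B,C$, $$\mathrm{Hom}(A\otimes B,C)\cong \mathrm{Hom}(B,A\rightharpoonup C),\qquad \mathrm{Hom}(A\otimes B,C)\cong \mathrm{Hom}(A,C\leftharpoonup B).$$ That is, $\mathsf{Dial}_M(\mathsf{Set})$ is monoidal biclosed.
   Context: A biclosed poset $(M,\le,\circ,e,\rightharpoonup,\leftharpoonup)$ is a partially ordered monoid $(M,\le,\circ,e)$, not necessarily commutative, with $\circ$ monotone in each argument, such that for all $a,b\in M$ the following exist: - $a\rightharpoonup b$, the largest $x\in M$ with $a\circ x\le b$; - $b\leftharpoonup a$, the largest $x\in M$ with $x\circ a\le b$. The category $\mathsf{Dial}_M(\mathsf{Set})$ of dialectica Lambek spaces is defined as follows. - Objects are triples $(U,X,\alpha)$ with $U,X$ sets and $\alpha:U\times X\to M$ a function. - A morphism $(f,F):(U,X,\alpha)\to(V,Y,\beta)$ is a pair of functions $f:U\to V$ and $F:Y\to X$ such that $\alpha(u,F(y))\le\beta(f(u),y)$ for all $u\in U$ and $y\in Y$. - Composition is $(g,G)\circ(f,F)=(g\circ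 f,\;F\circ G)$, and identities are $(\mathrm{id},\mathrm{id})$. Tensor product: $(U,X,\alpha)\otimes(V,Y,\beta)=(U\times V,\;(V\to X)\times(U\to Y),\;\alpha\otimes\beta)$, where $$(\alpha\otimes\beta)((u,v),(h,k))=\alpha(u,h(v))\circ\beta(k(u),v).$$ Here $S\to T$ denotes the set of all functions from $S$ to $T$. On morphisms $(f,F):(U,X,\alpha)\to(U',X',\alpha')$ and $(g,G):(V,Y,\beta)\to(V',Y',\beta')$, the tensor is $$(f,F)\otimes(g,G)=\big(f\times g,\;(h,k)\mapsto(F\circ h\circ g,\;G\circ k\circ f)\big).$$ Internal homs: for $A=(U,X,\alpha)$ and $C=(V,Y,\beta)$, $$A\rightharpoonup C=\big((U\to V)\times(Y\to X),\;U\times Y,\;\alpha\rightharpoonup\beta\big),\qquad (\alpha\rightharpoonup\beta)((h,H),(u,y))=\alpha(u,H(y))\rightharpoonup\beta(h(u),y),$$ $$C\leftharpoonup A=\big((U\to V)\times(Y\to X),\;U\times Y,\;\beta\leftharpoonup\alpha\big),\qquad (\beta\leftharpoonup\alpha)((h,H),(u,y))=\beta(h(u),y)\leftharpoonup\alpha(u,H(y)).$$ *)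

(* Defs.v *)
Set Implicit Arguments.
Unset Strict Implicit.

Definition is_largest {T : Type} (le : T -> T -> Prop) (P : T -> Prop) (m : T) : Prop :=
  P m /\ forall x, P x -> le x m.

Record biclosed_poset := BiclosedPoset {
  bp_car :> Type;
  bp_le : bp_car -> bp_car -> Prop;
  bp_le_refl : forall a, bp_le a a;
  bp_le_trans : forall a b c, bp_le a b -> bp_le b c -> bp_le a c;
  bp_le_antisym : forall a b, bp_le a b -> bp_le b a -> a = b;
  bp_mul : bp_car -> bp_car -> bp_car;
  bp_e : bp_car;
  bp_mul_assoc : forall a b c, bp_mul a (bp_mul b c) = bp_mul (bp_mul a b) c;
  bp_mul_e_l : forall a, bp_mul bp_e a = a;
  bp_mul_e_r : forall a, bp_mul a bp_e = a;
  bp_mul_mono_l : forall a a' b, bp_le a a' -> bp_le (bp_mul a b) (bp_mul a' b);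
  bp_mul_mono_r : forall a b b', bp_le b b' -> bp_le (bp_mul a b) (bp_mul a b');
  (* bp_rimp a b = a ⇀ b : the largest x with a ∘ x <= b *)
  bp_rimp : bp_car -> bp_car -> bp_car;
  bp_rimp_largest : forall a b, is_largest bp_le (fun x => bp_le (bp_mul a x) b) (bp_rimp a b);
  (* bp_limp b a = b ↼ a : the largest x with x ∘ a <= b *)
  bp_limp : bp_car -> bp_car -> bp_car;
  bp_limp_largest : forall a b, is_largest bp_le (fun x => bp_le (bp_mul x a) b) (bp_limp b a)
}.

Record dobj (M : biclosed_poset) := DObj {
  dU : Type;
  dX : Type;
  drel : dU -> dX -> bp_car M
}.
Arguments DObj {M} dU dX drel.
Arguments dU {M} d.
Arguments dX {M} d.
Arguments drel {M} d _ _.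

Definition rmor {M : biclosed_poset} (A B : dobj M) : Type :=
  ((dU A -> dU B) * (dX B -> dX A))%type.

Definition is_mor {M : biclosed_poset} {A B : dobj M} (p : rmor A B) : Prop :=
  forall (u : dU A) (y : dX B), @bp_le M (drel A u (snd p y)) (drel B (fst p u) y).

Definition rid {M : biclosed_poset} (A : dobj M) : rmor A A :=
  (fun u => u, fun x => x).

Definition rcomp {M : biclosed_poset} {A B C : dobj M} (g : rmor B C) (f : rmor A B) : rmor A C :=
  (fun u => fst g (fst f u), fun z => snd f (snd g z)).

Definition is_iso {M : biclosed_poset} {A B : dobj M} (f : rmor A B) (g : rmor B A) : Prop :=
  is_mor f /\ is_mor g /\ rcomp g f = rid A /\ rcomp f g = rid B.

Definition tens {M : biclosed_poset} (A B : dobj M) : dobj M :=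
  DObj (dU A * dU B)%type ((dU B -> dX A) * (dU A -> dX B))%type
    (fun uv hk => @bp_mul M (drel A (fst uv) (fst hk (snd uv)))
                           (drel B (snd uv) (snd hk (fst uv)))).

Definition rtens {M : biclosed_poset} {A A' B B' : dobj M}
  (f : rmor A A') (g : rmor B B') : rmor (tens A B) (tens A' B') :=
  (fun uv => (fst f (fst uv), fst g (snd uv)),
   fun hk => (fun v => snd f (fst hk (fst g v)), fun u => snd g (snd hk (fst f u)))).

Definition dI (M : biclosed_poset) : dobj M :=
  DObj unit unit (fun _ _ => @bp_e M).

Definition rhom {M : biclosed_poset} (A C : dobj M) : dobj M :=
  DObj ((dU A -> dU C) * (dX C -> dX A))%type (dU A * dX C)%type
    (fun hH uy => @bp_rimp M (drel A (fst uy) (snd hH (snd uy)))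
                            (drel C (fst hH (fst uy)) (snd uy))).

Definition lhom {M : biclosed_poset} (C A : dobj M) : dobj M :=
  DObj ((dU A -> dU C) * (dX C -> dX A))%type (dU A * dX C)%type
    (fun hH uy => @bp_limp M (drel C (fst hH (fst uy)) (snd uy))
                            (drel A (fst uy) (snd hH (snd uy)))).

Definition rhom_mor {M : biclosed_poset} {A A' C C' : dobj M}
  (a : rmor A' A) (c : rmor C C') : rmor (rhom A C) (rhom A' C') :=
  (fun hH => (fun u' => fst c (fst hH (fst a u')), fun y' => snd a (snd hH (snd c y'))),
   fun uy => (fst a (fst uy), snd c (snd uy))).

Definition lhom_mor {M : biclosed_poset} {A A' C C' : dobj M}
  (c : rmor C C') (a : rmor A' A) : rmor (lhom C A) (lhom C' A') :=
  (fun hH => (fun u' => fst c (fst hH (fst a u')), fun y' => snd a (snd hH (snd c y'))),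
   fun uy => (fst a (fst uy), snd c (snd uy))).

Definition dial_category (M : biclosed_poset) : Prop :=
  (forall A : dobj M, is_mor (rid A)) /\
  (forall (A B C : dobj M) (f : rmor A B) (g : rmor B C),
      is_mor f -> is_mor g -> is_mor (rcomp g f)) /\
  (forall (A B C D : dobj M) (f : rmor A B) (g : rmor B C) (h : rmor C D),
      is_mor f -> is_mor g -> is_mor h ->
      rcomp h (rcomp g f) = rcomp (rcomp h g) f) /\
  (forall (A B : dobj M) (f : rmor A B), is_mor f ->
      rcomp (rid B) f = f /\ rcomp f (rid A) = f).

Definition tens_bifunctor (M : biclosed_poset) : Prop :=
  (forall (A A' B B' : dobj M) (f : rmor A A') (g : rmor B B'),
      is_mor f -> is_mor g -> is_mor (rtens f g)) /\
  (forall A B : dobj M, rtens (rid A) (rid B) = rid (tens A B)) /\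
  (forall (A A' A'' B B' B'' : dobj M) (f : rmor A A') (f' : rmor A' A'')
          (g : rmor B B') (g' : rmor B' B''),
      is_mor f -> is_mor f' -> is_mor g -> is_mor g' ->
      rtens (rcomp f' f) (rcomp g' g) = rcomp (rtens f' g') (rtens f g)).

Definition monoidal_structure (M : biclosed_poset)
  (asc : forall A B C : dobj M, rmor (tens (tens A B) C) (tens A (tens B C)))
  (asc' : forall A B C : dobj M, rmor (tens A (tens B C)) (tens (tens A B) C))
  (lu : forall A : dobj M, rmor (tens (dI M) A) A)
  (lu' : forall A : dobj M, rmor A (tens (dI M) A))
  (ru : forall A : dobj M, rmor (tens A (dI M)) A)
  (ru' : forall A : dobj M, rmor A (tens A (dI M))) : Prop :=
  (forall A B C, is_iso (asc A B C) (asc' A B C)) /\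
  (forall A, is_iso (lu A) (lu' A)) /\
  (forall A, is_iso (ru A) (ru' A)) /\
  (forall (A A' B B' C C' : dobj M) (f : rmor A A') (g : rmor B B') (h : rmor C C'),
      is_mor f -> is_mor g -> is_mor h ->
      rcomp (asc A' B' C') (rtens (rtens f g) h)
      = rcomp (rtens f (rtens g h)) (asc A B C)) /\
  (forall (A A' : dobj M) (f : rmor A A'), is_mor f ->
      rcomp (lu A') (rtens (rid (dI M)) f) = rcomp f (lu A)) /\
  (forall (A A' : dobj M) (f : rmor A A'), is_mor f ->
      rcomp (ru A') (rtens f (rid (dI M))) = rcomp f (ru A)) /\
  (forall A B C D : dobj M,
      rcomp (asc A B (tens C D)) (asc (tens A B) C D)
      = rcomp (rtens (rid A) (asc B C D))
              (rcomp (asc A (tens B C) D) (rtens (asc A B C) (rid D)))) /\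
  (forall A B : dobj M,
      rcomp (rtens (rid A) (lu B)) (asc A (dI M) B) = rtens (ru A) (rid B)).

Definition rhom_functor (M : biclosed_poset) : Prop :=
  (forall (A A' C C' : dobj M) (a : rmor A' A) (c : rmor C C'),
      is_mor a -> is_mor c -> is_mor (rhom_mor a c)) /\
  (forall A C : dobj M, rhom_mor (rid A) (rid C) = rid (rhom A C)) /\
  (forall (A A' A'' C C' C'' : dobj M) (a : rmor A' A) (a' : rmor A'' A')
          (c : rmor C C') (c' : rmor C' C''),
      is_mor a -> is_mor a' -> is_mor c -> is_mor c' ->
      rhom_mor (rcomp a a') (rcomp c' c) = rcomp (rhom_mor a' c') (rhom_mor a c)).

Definition lhom_functor (M : biclosed_poset) : Prop :=
  (forall (A A' C C' : dobj M) (c : rmor C C') (a : rmor A' A),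
      is_mor a -> is_mor c -> is_mor (lhom_mor c a)) /\
  (forall A C : dobj M, lhom_mor (rid C) (rid A) = rid (lhom C A)) /\
  (forall (A A' A'' C C' C'' : dobj M) (a : rmor A' A) (a' : rmor A'' A')
          (c : rmor C C') (c' : rmor C' C''),
      is_mor a -> is_mor a' -> is_mor c -> is_mor c' ->
      lhom_mor (rcomp c' c) (rcomp a a') = rcomp (lhom_mor c' a') (lhom_mor c a)).

Definition right_closed_bij (M : biclosed_poset)
  (phi : forall A B C : dobj M, rmor (tens A B) C -> rmor B (rhom A C))
  (phi' : forall A B C : dobj M, rmor B (rhom A C) -> rmor (tens A B) C) : Prop :=
  (forall A B C (p : rmor (tens A B) C), is_mor p ->
      is_mor (phi A B C p) /\ phi' A B C (phi A B C p) = p) /\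
  (forall A B C (q : rmor B (rhom A C)), is_mor q ->
      is_mor (phi' A B C q) /\ phi A B C (phi' A B C q) = q) /\
  (forall (A A' B B' C C' : dobj M) (a : rmor A' A) (b : rmor B' B) (c : rmor C C')
          (p : rmor (tens A B) C),
      is_mor a -> is_mor b -> is_mor c -> is_mor p ->
      phi A' B' C' (rcomp c (rcomp p (rtens a b)))
      = rcomp (rhom_mor a c) (rcomp (phi A B C p) b)).

Definition left_closed_bij (M : biclosed_poset)
  (psi : forall A B C : dobj M, rmor (tens A B) C -> rmor A (lhom C B))
  (psi' : forall A B C : dobj M, rmor A (lhom C B) -> rmor (tens A B) C) : Prop :=
  (forall A B C (p : rmor (tens A B) C), is_mor p ->
      is_mor (psi A B C p) /\ psi' A B C (psi A B C p) = p) /\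
  (forall A B C (q : rmor A (lhom C B)), is_mor q ->
      is_mor (psi' A B C q) /\ psi A B C (psi' A B C q) = q) /\
  (forall (A A' B B' C C' : dobj M) (a : rmor A' A) (b : rmor B' B) (c : rmor C C')
          (p : rmor (tens A B) C),
      is_mor a -> is_mor b -> is_mor c -> is_mor p ->
      psi A' B' C' (rcomp c (rcomp p (rtens a b)))
      = rcomp (lhom_mor c b) (rcomp (psi A B C p) a)).

(* Main.v *)
Require Import Defs.
From Stdlib Require Import FunctionalExtensionality.

Section S.
Variable M : biclosed_poset.

Lemma le_tr (a b c : M) : bp_le a b -> bp_le b c -> bp_le a c.
Proof. apply bp_le_trans. Qed.

Lemma mul_mono (a a' b b' : M) : bp_le a a' -> bp_le b b' -> bp_le (bp_mul a b) (bp_mul a' b').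
Proof. intros; eapply le_tr. apply bp_mul_mono_l; eauto. apply bp_mul_mono_r; auto. Qed.

Lemma rimp_adj (a x b : M) : bp_le (bp_mul a x) b <-> bp_le x (bp_rimp a b).
Proof.
  destruct (bp_rimp_largest a b) as [H1 H2]. split; intro H; auto.
  eapply le_tr. apply bp_mul_mono_r; eauto. exact H1.
Qed.

Lemma limp_adj (a x b : M) : bp_le (bp_mul x a) b <-> bp_le x (bp_limp b a).
Proof.
  destruct (bp_limp_largest a b) as [H1 H2]. split; intro H; auto.
  eapply le_tr. apply bp_mul_mono_l; eauto. exact H1.
Qed.

Lemma rimp_mono (a a' b b' : M) : bp_le a' a -> bp_le b b' ->
  bp_le (bp_rimp a b) (bp_rimp a' b').
Proof.
  intros. apply rimp_adj. eapply le_tr. apply bp_mul_mono_l; eauto.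
  eapply le_tr. apply rimp_adj, bp_le_refl. auto.
Qed.

Lemma limp_mono (a a' b b' : M) : bp_le a' a -> bp_le b b' ->
  bp_le (bp_limp b a) (bp_limp b' a').
Proof.
  intros. apply limp_adj. eapply le_tr. apply bp_mul_mono_r; eauto.
  eapply le_tr. apply limp_adj, bp_le_refl. auto.
Qed.
End S.

Definition asc {M : biclosed_poset} (A B C : dobj M) : rmor (tens (tens A B) C) (tens A (tens B C)) :=
 (fun x => (fst (fst x), (snd (fst x), snd x)),
  fun hk => (fun c => (fun b => fst hk (b, c), fun a => fst (snd hk a) c),
             fun ab => snd (snd hk (fst ab)) (snd ab))).

Definition asc' {M : biclosed_poset} (A B C : dobj M) : rmor (tens A (tens B C)) (tens (tens A B) C) :=
 (fun x => ((fst x, fst (snd x)), snd (snd x)),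
  fun hk => (fun bc => fst (fst hk (snd bc)) (fst bc),
             fun a => (fun c => snd (fst hk c) a, fun b => snd hk (a, b)))).

Definition lu {M : biclosed_poset} (A : dobj M) : rmor (tens (dI M) A) A :=
  (fun x => snd x, fun x => (fun _ => tt, fun _ => x)).
Definition lu' {M : biclosed_poset} (A : dobj M) : rmor A (tens (dI M) A) :=
  (fun a => (tt, a), fun hk => snd hk tt).
Definition ru {M : biclosed_poset} (A : dobj M) : rmor (tens A (dI M)) A :=
  (fun x => fst x, fun x => (fun _ => x, fun _ => tt)).
Definition ru' {M : biclosed_poset} (A : dobj M) : rmor A (tens A (dI M)) :=
  (fun a => (a, tt), fun hk => fst hk tt).

Definition phi {M : biclosed_poset} (A B C : dobj M) (p : rmor (tens A B) C) : rmor B (rhom A C) :=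
  (fun v => (fun u => fst p (u, v), fun z => fst (snd p z) v),
   fun uz => snd (snd p (snd uz)) (fst uz)).
Definition phi' {M : biclosed_poset} (A B C : dobj M) (q : rmor B (rhom A C)) : rmor (tens A B) C :=
  (fun uv => fst (fst q (snd uv)) (fst uv),
   fun z => (fun v => snd (fst q v) z, fun u => snd q (u, z))).
Definition psi {M : biclosed_poset} (A B C : dobj M) (p : rmor (tens A B) C) : rmor A (lhom C B) :=
  (fun u => (fun v => fst p (u, v), fun z => snd (snd p z) u),
   fun vz => fst (snd p (snd vz)) (fst vz)).
Definition psi' {M : biclosed_poset} (A B C : dobj M) (q : rmor A (lhom C B)) : rmor (tens A B) C :=
  (fun uv => fst (fst q (fst uv)) (snd uv),
   fun z => (fun v => snd q (v, z), fun u => snd (fst q u) z)).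

Ltac ext_crush :=
  unfold rcomp, rid, rtens, rhom_mor, lhom_mor, asc, asc', lu, lu', ru, ru', phi, phi', psi, psi' in *;
  repeat (first
    [ progress simpl
    | match goal with x : ?T |- _ => let T' := eval hnf in T in
        match T' with prod _ _ => destruct x | unit => destruct x end end
    | reflexivity
    | match goal with |- @eq unit ?a ?b => destruct a; destruct b; reflexivity end
    | match goal with |- @eq ?T _ _ => let T' := eval hnf in T in
        match T' with prod _ _ => apply injective_projections end end
    | match goal with |- @eq (forall _, _) _ _ => apply functional_extensionality_dep; intro end ]).

Ltac mulrefl := intros; unfold asc, asc', lu, lu', ru, ru' in *; simpl;
  repeat match goal with x : prod _ _ |- _ => destruct x | x : unit |- _ => destruct x end;
  simpl; rewrite ?bp_mul_assoc, ?bp_mul_e_l, ?bp_mul_e_r; apply bp_le_refl.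

Theorem theorem1 (M : biclosed_poset) :
  (* (1) *)
  dial_category M /\
  (* (2) *)
  tens_bifunctor M /\
  (exists (asc : forall A B C : dobj M, rmor (tens (tens A B) C) (tens A (tens B C)))
          (asc' : forall A B C : dobj M, rmor (tens A (tens B C)) (tens (tens A B) C))
          (lu : forall A : dobj M, rmor (tens (dI M) A) A)
          (lu' : forall A : dobj M, rmor A (tens (dI M) A))
          (ru : forall A : dobj M, rmor (tens A (dI M)) A)
          (ru' : forall A : dobj M, rmor A (tens A (dI M))),
      monoidal_structure asc asc' lu lu' ru ru') /\
  (* (3) *)
  rhom_functor M /\ lhom_functor M /\
  (exists (phi : forall A B C : dobj M, rmor (tens A B) C -> rmor B (rhom A C))
          (phi' : forall A B C : dobj M, rmor B (rhom A C) -> rmor (tens A B) C),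
      right_closed_bij phi phi') /\
  (exists (psi : forall A B C : dobj M, rmor (tens A B) C -> rmor A (lhom C B))
          (psi' : forall A B C : dobj M, rmor A (lhom C B) -> rmor (tens A B) C),
      left_closed_bij psi psi').
Proof.
  split; [|split; [|split; [|split; [|split; [|split]]]]].
  - split; [|split; [|split]].
    + intros A u y. apply bp_le_refl.
    + intros A B C f g Hf Hg u z. simpl. eapply le_tr. apply Hf. apply Hg.
    + reflexivity.
    + intros; split; ext_crush.
  - split; [|split].
    + intros A A' B B' f g Hf Hg [u v] [h k]. simpl. apply mul_mono; [apply Hf|apply Hg].
    + intros; ext_crush.
    + intros; ext_crush.
  - exists (@asc M), (@asc' M), (@lu M), (@lu' M), (@ru M), (@ru' M).
    split; [|split; [|split; [|split; [|split; [|split; [|split]]]]]];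
      try (intros; repeat split; try (intros ? ?; mulrefl); ext_crush; fail).
    all: intros; repeat split. all: try (intros ? ?; mulrefl).
  - split; [|split].
    + intros A A' C C' a c Ha Hc [h H] [u y]. simpl.
      apply rimp_mono; [apply Ha | apply Hc].
    + intros; ext_crush.
    + intros; ext_crush.
  - split; [|split].
    + intros A A' C C' c a Ha Hc [h H] [u y]. simpl.
      apply limp_mono; [apply Ha | apply Hc].
    + intros; ext_crush.
    + intros; ext_crush.
  - exists (@phi M), (@phi' M). split; [|split].
    + intros A B C p Hp. split.
      * intros v [u z]. simpl. apply rimp_adj. apply (Hp (u, v) z).
      * ext_crush.
    + intros A B C q Hq. split.
      * intros [u v] z. simpl. apply rimp_adj. apply (Hq v (u, z)).
      * ext_crush.
    + intros; ext_crush.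
  - exists (@psi M), (@psi' M). split; [|split].
    + intros A B C p Hp. split.
      * intros u [v z]. simpl. apply limp_adj. apply (Hp (u, v) z).
      * ext_crush.
    + intros A B C q Hq. split.
      * intros [u v] z. simpl. apply limp_adj. apply (Hq u (v, z)).
      * ext_crush.
    + intros; ext_crush.
Qed.
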